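(* Let $n,m\ge0$ be integers, $d_1,\ldots,d_m$ positive integers, and $g_\bullet=|n;d_1,\ldots,d_m|$. (1) If $n\ge1$, then $|n;d_1,\ldots,d_m,1|=|n-1;d_1,\ldots,d_m|$. (2) For a positive integer $s$, if $h_\bullet=|n;d_1,\ldots,d_m,s|$, then with $g_j=0$ for $j<0$ and $t=\min\{d\ge0: g_d\le g_{d-s}\}$, one has $h_d=g_d-g_{d-s}>0$ for $d<t$ and $h_d=0$ for $d\ge t$. (3) If $n\ge1$, then $g^{(1)}_\bullet=|n-1;d_1,\ldots,d_m|$ if and only if $g_d\le g_{d-1}$ for all $d\ge r_0(g_\bullet)$.
   Context: For $P=\sum_{i\ge0}p_iz^i\in\mathbb{Z}[[z]]$ let $t=\min\{d:p_d\le0\}$ and $|P|=\sum q_iz^i$ with $q_i=p_i$ for $i<t$ and $q_i=0$ for $i\ge t$. For integers $n,m\ge0$ and positive integers $d_1,\ldots,d_m$, the Fröberg sequence $|n;d_1,\ldots,d_m|$ is the sequence $(h_0,h_1,\ldots)$ with $\sum h_iz^i=\left|\prod_{j=1}^m(1-z^{d_j})/(1-z)^n\right|$. For a sequence $g_\bullet$ with $g_0=1$, $g^{(1)}_\bullet$ is defined by $g^{(1)}_0=1$ and $g^{(1)}_d=\max\{0,g_d-g_{d-1}\}$ for $d\ge1$, and $r_0(g_\bullet)=\min\{d\ge1:g_d\le g_{d-1}\}$ ($\infty$ if none). *)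

(* Defs.v *)
(* Formal power series in Z[[z]] are represented by their
   coefficient sequences nat -> int. *)
From mathcomp Require Import all_boot all_order all_algebra.
Set Implicit Arguments. Unset Strict Implicit. Unset Printing Implicit Defensive.
Import Order.TTheory GRing.Theory Num.Theory.
Local Open Scope ring_scope.

Definition series := nat -> int.

(* coefficients of P * (1 - z^d) *)
Definition mul_1mz (d : nat) (P : series) : series :=
  fun k => P k - (if (d <= k)%N then P (k - d)%N else 0).

(* coefficients of P / (1 - z) = P * (1 + z + z^2 + ...) *)
Definition div_1mz (P : series) : series :=
  fun k => \sum_(i < k.+1) P i.

Definition one_series : series := fun k => if k == 0%N then 1 else 0.

(* coefficients of prod_{d in ds} (1 - z^d) / (1 - z)^n *)
Definition frob_series (n : nat) (ds : seq nat) : series :=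
  iter n div_1mz (foldr mul_1mz one_series ds).

(* |P| : q_i = p_i for i < t, 0 for i >= t, where t = min {d : p_d <= 0};
   "i < t" unfolds to "p_j > 0 for all j <= i". *)
Definition trunc (P : series) : series :=
  fun i => if [forall j : 'I_i.+1, 0 < P j] then P i else 0.

Definition froberg (n : nat) (ds : seq nat) : series :=
  trunc (frob_series n ds).

Definition first_diff (g : series) : series :=
  fun d => if d == 0%N then 1 else Num.max 0 (g d - g d.-1).

(* "d >= r_0(g)" where r_0(g) = min {e >= 1 : g_e <= g_{e-1}} (infinite if none):
   unfolds to the existence of such an e with e <= d. *)
Definition ge_r0 (g : series) (d : nat) : Prop :=
  exists e : nat, (0 < e)%N /\ (e <= d)%N /\ g e <= g e.-1.

(* g shifted by s with g_j = 0 for j < 0 : the value g_{d-s} *)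
Definition shifted (g : series) (s d : nat) : int :=
  if (s <= d)%N then g (d - s)%N else 0.

(* Main.v *)
Require Import Defs.
From mathcomp Require Import all_boot all_order all_algebra.
From mathcomp Require Import zify ring lra.
From Stdlib Require Import FunctionalExtensionality Classical.
Import Order.TTheory GRing.Theory Num.Theory.
Local Open Scope ring_scope.

Lemma trunc_pos (P : series) i : (forall j, (j <= i)%N -> 0 < P j) -> trunc P i = P i.
Proof.
move=> H; rewrite /trunc; case: ifP => // /negP []; apply/forallP => j.
by apply: H; rewrite -ltnS ltn_ord.
Qed.

Lemma trunc_npos (P : series) i j : (j <= i)%N -> P j <= 0 -> trunc P i = 0.
Proof.
move=> hj hP; rewrite /trunc; case: ifP => // /forallP H.
have hj' : (j < i.+1)%N by rewrite ltnS.
by have := H (Ordinal hj'); rewrite /= ltNge hP.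
Qed.

Lemma trunc_gt0 (P : series) i : 0 < trunc P i -> forall j, (j <= i)%N -> 0 < P j.
Proof.
move=> H j hj; rewrite ltNge; apply/negP => hP; move: H.
by rewrite (trunc_npos _ _ _ hj hP) ltxx.
Qed.

Lemma trunc_cases (P : series) i :
  (forall j, (j <= i)%N -> 0 < P j) \/ exists j, (j <= i)%N /\ P j <= 0.
Proof.
case: (classic (exists j, (j <= i)%N /\ P j <= 0)) => H; [by right|left].
move=> j hj; rewrite ltNge; apply/negP => hP; apply: H; by exists j.
Qed.

Lemma trunc_ge0 (P : series) i : 0 <= trunc P i.
Proof.
case: (trunc_cases P i) => [H|[j [hj hP]]].
  by rewrite trunc_pos // ltW // H.
by rewrite (trunc_npos _ _ _ hj hP).
Qed.

Lemma div0 P : div_1mz P 0 = P 0%N.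
Proof. by rewrite /div_1mz big_ord_recr big_ord0 /= add0r. Qed.

Lemma divS P k : div_1mz P k.+1 = div_1mz P k + P k.+1.
Proof. by rewrite /div_1mz big_ord_recr. Qed.

Lemma div_uniq P Q : Q 0%N = P 0%N -> (forall k, Q k.+1 = Q k + P k.+1) -> Q = div_1mz P.
Proof.
move=> h0 hS; apply: functional_extensionality => k.
elim: k => [|k IH]; first by rewrite div0.
by rewrite divS -IH.
Qed.

Lemma div_mul s P : div_1mz (mul_1mz s P) = mul_1mz s (div_1mz P).
Proof.
symmetry; apply: div_uniq.
  rewrite /mul_1mz div0; case: ifP => // _; by rewrite !sub0n div0.
move=> k; rewrite /mul_1mz divS.
case: (ltnP k s) => hs.
- case: (eqVneq s k.+1) => [->|hne].
  + rewrite leqnn subnn div0; ring.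
  + have -> : (s <= k.+1)%N = false by lia.
    ring.
- have -> : (s <= k.+1)%N = true by lia.
  rewrite subSn // divS; ring.
Qed.

Lemma mul_comm d e P : mul_1mz d (mul_1mz e P) = mul_1mz e (mul_1mz d P).
Proof.
apply: functional_extensionality => k; rewrite /mul_1mz -!subnDA (addnC e d).
case hd: (d <= k)%N; case he: (e <= k)%N; case h1: (e <= k - d)%N; case h2: (d <= k - e)%N; try lia; ring.
Qed.

Lemma foldr_rcons ds s :
  foldr mul_1mz one_series (rcons ds s) = mul_1mz s (foldr mul_1mz one_series ds).
Proof. elim: ds => //= a ds ->; exact: mul_comm. Qed.

Lemma frob_rcons n ds s : frob_series n (rcons ds s) = mul_1mz s (frob_series n ds).
Proof.
rewrite /frob_series; elim: n => [|n IH]; first exact: foldr_rcons.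
by rewrite !iterS IH div_mul.
Qed.

Lemma frob_S n ds : frob_series n.+1 ds = div_1mz (frob_series n ds).
Proof. by rewrite /frob_series iterS. Qed.

Lemma frob0 n ds : all (fun d => 0 < d)%N ds -> frob_series n ds 0%N = 1.
Proof.
move=> hds; elim: n => [|n IH]; last by rewrite frob_S div0 IH.
rewrite /frob_series /=; elim: ds hds => //= a ds IH /andP [ha hds].
by rewrite /mul_1mz IH // leqNgt ha /= subr0.
Qed.

Lemma mul_1 P : mul_1mz 1 (div_1mz P) = P.
Proof.
apply: functional_extensionality => k; case: k => [|k]; rewrite /mul_1mz /=.
  by rewrite div0 subr0.
rewrite subn1 /= divS; ring.
Qed.

Lemma max0_eq0 (x : int) : Num.max 0 x = 0 <-> x <= 0.
Proof.
split.
  move=> h; rewrite leNgt; apply/negP => hx; move: h; rewrite max_r ?ltW //.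
  by move=> h; move: hx; rewrite h ltxx.
by move=> hx; rewrite max_l.
Qed.

Lemma max0_pos (x : int) : 0 < x -> Num.max 0 x = x.
Proof. by move=> hx; rewrite max_r // ltW. Qed.

Lemma div_pos P j : (forall i, (i <= j)%N -> 0 < P i) -> 0 < div_1mz P j.
Proof.
elim: j => [|j IH] H; first by rewrite div0 H.
rewrite divS; apply: ltr_wpDl; last by apply: H.
by apply: ltW; apply: IH => i hi; apply: H; lia.
Qed.

Theorem lemma4p3 (n : nat) (ds : seq nat) (hds : all (fun d => 0 < d)%N ds) :
  let g := froberg n ds in
  (* (1) *)
  ((0 < n)%N -> forall d, froberg n (rcons ds 1%N) d = froberg n.-1 ds d) /\
  (* (2) *)
  (forall s : nat, (0 < s)%N ->
     let h := froberg n (rcons ds s) in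
     forall d : nat,
       ((forall e : nat, (e <= d)%N -> shifted g s e < g e) ->
          h d = g d - shifted g s d /\ 0 < h d) /\
       ((exists e : nat, (e <= d)%N /\ g e <= shifted g s e) -> h d = 0)) /\
  (* (3) *)
  ((0 < n)%N ->
     ((forall d, first_diff g d = froberg n.-1 ds d) <->
      (forall d : nat, ge_r0 g d -> g d <= g d.-1))).
Proof.
move=> g; split; [|split].
- move=> hn d; case: n hn g => // n _ g /=.
  by rewrite /froberg frob_rcons frob_S mul_1.
- move=> s hs h d.
  set F := frob_series n ds.
  set G := mul_1mz s F.
  have hh : h = trunc G by rewrite /h /froberg frob_rcons.
  have hg : g = trunc F by [].
  have posG : (forall j, (j <= d)%N -> 0 < G j) -> forall j, (j <= d)%N -> 0 < F j.
    move=> HG; elim/ltn_ind => j IH hj.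
    have := HG j hj; rewrite /G /mul_1mz; case: ifP => hsj; last by rewrite subr0.
    have h1 : (j - s < j)%N by lia.
    have h2 : (j - s <= d)%N by lia.
    have := IH _ h1 h2; lra.
  have key : (forall j, (j <= d)%N -> 0 < F j) ->
      forall e, (e <= d)%N -> G e = g e - shifted g s e.
    move=> HF e he.
    have hgF : forall e', (e' <= e)%N -> g e' = F e'.
      move=> e' he'; rewrite hg trunc_pos // => j hj; apply: HF; lia.
    rewrite /G /mul_1mz /shifted hgF //; case: ifP => // hse; rewrite hgF //; lia.
  split.
  + move=> H.
    have HF : forall j, (j <= d)%N -> 0 < F j.
      move=> j hj; have := H j hj => hlt.
      have hsh : 0 <= shifted g s j.
        by rewrite /shifted; case: ifP => _ //; rewrite hg trunc_ge0.
      have hgj : 0 < trunc F j by rewrite -hg; lra.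
      exact: (trunc_gt0 F j hgj j (leqnn j)).
    have HG : forall j, (j <= d)%N -> 0 < G j.
      move=> j hj; rewrite (key HF j hj).
      have := H j hj; lra.
    rewrite hh trunc_pos // key //; split => //.
    by rewrite -key // HG.
  + move=> [e [he hle]].
    case: (trunc_cases G d) => [HG|[j [hj hGj]]]; last by rewrite hh (trunc_npos _ _ _ hj hGj).
    have := HG e he; rewrite (key (posG HG) e he).
    lra.
- move=> hn; have hg0 : g = froberg n ds by [].
  clearbody g; case: n hn hg0 => // n _ hg0 /=.
  set F' := frob_series n ds.
  have hF : frob_series n.+1 ds = div_1mz F' by rewrite frob_S.
  have hg : g = trunc (div_1mz F') by rewrite hg0 /froberg hF.
  have F'0 : F' 0%N = 1 by rewrite /F' frob0.
  have hfr : froberg n ds = trunc F' by [].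
  rewrite hfr.
  suff H : forall d, (first_diff g d = trunc F' d) <-> (ge_r0 g d -> g d <= g d.-1).
    by split => K d; [apply/H/K | apply/H/K].
  case => [|d].
    rewrite /first_diff /= trunc_pos; last by move=> j; rewrite leqn0 => /eqP ->; rewrite F'0.
    rewrite F'0; split => // _ [e [he [he' _]]]; lia.
  rewrite /first_diff /=.
  case: (classic (ge_r0 g d.+1)) => hr.
  + have -> : trunc F' d.+1 = 0.
      move: hr => [e [he0 [hed hge]]].
      case: (trunc_cases (div_1mz F') e) => [HF|[j [hj hFj]]].
      * case: e he0 hed hge HF => // e _ hed hge HF.
        apply: (trunc_npos _ _ e.+1) => //.
        move: hge; rewrite hg /= !trunc_pos //; last by move=> j hj; apply: HF; lia.
        rewrite divS; lra.
      * case: (trunc_cases F' j) => [HF'|[i [hi hF'i]]].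
          by have := div_pos _ _ HF'; lra.
        apply: (trunc_npos _ _ i) => //; lia.
    split; first by move=> /max0_eq0 h _; lra.
    by move=> /(_ hr) h; apply/max0_eq0; lra.
  + have hlt : forall e, (0 < e)%N -> (e <= d.+1)%N -> g e.-1 < g e.
      move=> e h1 h2; rewrite ltNge; apply/negP => hle; apply: hr; by exists e.
    have HF : forall j, (j <= d.+1)%N -> 0 < div_1mz F' j.
      apply: trunc_gt0; rewrite -hg.
      have := hlt d.+1 isT (leqnn _); have := trunc_ge0 (div_1mz F') d; rewrite -hg /=; lra.
    have hgF : forall j, (j <= d.+1)%N -> g j = div_1mz F' j.
      move=> j hj; rewrite hg trunc_pos // => i hi; apply: HF; lia.
    have HF' : forall j, (j <= d.+1)%N -> 0 < F' j.
      case => [|j] hj; first by rewrite F'0.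
      have := hlt j.+1 isT hj; rewrite /= !hgF //; last by lia.
      rewrite divS; lra.
    rewrite trunc_pos // max0_pos; last first.
      by have := hlt d.+1 isT (leqnn _); rewrite subr_gt0.
    rewrite !hgF // divS; have -> : div_1mz F' d + F' d.+1 - div_1mz F' d = F' d.+1 by ring.
    split => // _ h; exfalso; exact: hr h.
Qed.
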